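(* Let $p$ be an integer with $p>2$ and let $G$ be a graph with at least one vertex. Then $\mathrm{id}^{\leq p}(G) \leq \frac{1}{p-1}|E(G)| + \frac{p-2}{p-1}(|V(G)|-1)$.
   Context: All graphs are finite and simple. For an oriented graph $D$ and a set $X\subseteq V(D)$, the inversion of $X$ reverses the orientation of every arc with both endvertices in $X$. For an integer $p\ge 2$, a $(\leq p)$-inversion is the inversion of a set of at most $p$ vertices. For a graph $G$, $\mathrm{id}^{\leq p}(G)$ (the $(\leq p)$-inversion diameter) is the maximum, over all ordered pairs $(\vec G_1,\vec G_2)$ of orientations of $G$ (on the same labelled vertex set), of the minimum number of $(\leq p)$-inversions whose successive application transforms $\vec G_1$ into $\vec G_2$. *)

(* Defs.v *)
From mathcomp Require Import all_boot all_order all_algebra.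
Set Implicit Arguments. Unset Strict Implicit. Unset Printing Implicit Defensive.

(* A finite simple graph: vertex set V (a finType), adjacency relation e,
   assumed symmetric and irreflexive (hypotheses in the theorem). *)

Definition edges (V : finType) (e : rel V) : {set {set V}} :=
  [set X : {set V} | [exists u, exists v, e u v && (X == [set u; v])]].

(* An orientation of (V,e): a relation o ("arc u -> v") such that arcs are
   only on edges, and each edge gets exactly one direction. *)
Definition is_orientation (V : finType) (e : rel V) (o : rel V) : Prop :=
  (forall u v, o u v -> e u v) /\ (forall u v, e u v -> o u v = ~~ o v u).

Definition invert (V : finType) (X : {set V}) (o : rel V) : rel V :=
  fun u v => if (u \in X) && (v \in X) then o v u else o u v.

Definition apply_inversions (V : finType) (s : seq {set V}) (o : rel V) : rel V :=
  foldl (fun o' X => invert X o') o s.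

Definition transforms (V : finType) (p : nat) (s : seq {set V}) (o1 o2 : rel V) : Prop :=
  all (fun X : {set V} => #|X| <= p) s /\ apply_inversions s o1 =2 o2.

(* id^{<=p}(G) <= b, unfolded: for every ordered pair of orientations, some
   sequence of at most b (<= p)-inversions transforms the first into the second. *)
Definition inv_diam_le (V : finType) (e : rel V) (p : nat) (b : rat) : Prop :=
  forall o1 o2 : rel V, is_orientation e o1 -> is_orientation e o2 ->
    exists s : seq {set V}, transforms p s o1 o2 /\ ((size s)%:R <= b)%R.

(* Main.v *)
Require Import Defs.
From mathcomp Require Import all_boot all_order all_algebra.
From mathcomp Require Import zify.
Set Implicit Arguments. Unset Strict Implicit. Unset Printing Implicit Defensive.

Definition cnt (V : finType) (s : seq {set V}) (u v : V) : nat :=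
  count (fun X : {set V} => (u \in X) && (v \in X)) s.

Lemma cntC (V : finType) (s : seq {set V}) u v : cnt s u v = cnt s v u.
Proof. by apply: eq_count => X; rewrite andbC. Qed.

Lemma cnt_cat (V : finType) (s1 s2 : seq {set V}) u v :
  cnt (s1 ++ s2) u v = cnt s1 u v + cnt s2 u v.
Proof. by rewrite /cnt count_cat. Qed.

Lemma parity (V : finType) (s : seq {set V}) (o : rel V) u v :
  apply_inversions s o u v = if odd (cnt s u v) then o v u else o u v.
Proof.
elim: s o => [|X s IH] o //=.
rewrite /apply_inversions /= in IH *. rewrite IH /invert oddD.
by case: (u \in X); case: (v \in X); case: (odd _).
Qed.

Lemma cnt0 (V : finType) (s : seq {set V}) (W : {set V}) u w :
  all (fun X : {set V} => X \subset W) s -> u \notin W -> cnt s u w = 0.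
Proof.
move=> H uW; apply/eqP; rewrite eqn0Ngt -has_count; apply/hasPn => X /(allP H) sub.
apply/negP => /andP [uX _]; move/subsetP: sub => /(_ u uX).
by rewrite (negbTE uW).
Qed.

Lemma star (p : nat) (hp : 2 < p) (V : finType) (v : V) (l : seq V) :
  uniq l -> v \notin l -> exists s1 : seq {set V},
  [/\ all (fun X : {set V} => (#|X| <= p) && (X \subset v |: [set x in l])) s1,
    (p-1) * size s1 <= size l + (p-2) &
    forall u, u != v -> odd (cnt s1 v u) = (u \in l)].
Proof.
have [n Hn] : exists n, size l <= n by exists (size l).
elim: n l Hn => [|n IH] l Hl ul vl.
  case: l Hl ul vl => // _ _ _; by exists [::]; split; [done| rewrite muln0 | move=> u _; rewrite in_nil].
case: l Hl ul vl => [|a l'] Hl ul vl; first by exists [::]; split; [done| rewrite muln0 | move=> u _; rewrite in_nil].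
set l0 := a :: l' in Hl ul vl *.
set C := take (p-1) l0; set r := drop (p-1) l0.
have sr : size r <= n by rewrite /r size_drop; move: Hl; rewrite /l0 /=; lia.
have ur : uniq r by rewrite /r drop_uniq.
have vr : v \notin r by apply: contra vl => /mem_drop.
have [s1 [A1 S1 P1]] := IH r sr ur vr.
exists ((v |: [set x in C]) :: s1); split.
- rewrite /=; apply/andP; split; first apply/andP; first split.
  + rewrite cardsU1.
    apply: (@leq_trans (1 + (p - 1))); last lia.
    apply: leq_add; first exact: leq_b1.
    rewrite cardsE; apply: leq_trans (card_size _) _; by rewrite /C size_take_min geq_minl.
  + by apply: setUS; apply/subsetP => x; rewrite !inE => /mem_take.
  + apply/allP => X /(allP A1) /andP [-> sub] /=; apply: subset_trans sub _.
    by apply: setUS; apply/subsetP => x; rewrite !inE => /mem_drop.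
- rewrite [size (_ :: s1)]/= mulnS.
  have : size r = size l0 - (p-1) by rewrite /r size_drop.
  case: (leqP (p-1) (size l0)) => hs sz.
    move: S1; rewrite sz; lia.
  have r0 : size r = 0 by lia.
  move: S1; rewrite r0 add0n.
  case: (size s1) => [|k]; first by rewrite muln0; move: Hl; rewrite /l0 /=; lia.
  rewrite mulnS => h; have : p - 1 <= p - 2 by apply: leq_trans (leq_addr _ _) h.
  lia.
- move=> u uv; have e0 : l0 = C ++ r by rewrite cat_take_drop.
  rewrite [in RHS]e0 mem_cat.
  rewrite /cnt /= -/(cnt s1 v u) oddD P1 // in_setU1 eqxx /= in_setU1 (negbTE uv) /= inE oddb.
  move: ul; rewrite e0 cat_uniq => /and3P [_ hC _].
  case uC: (u \in C); case ur': (u \in r) => //.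
  by move/hasP: hC; case; exists u.
Qed.

Definition eW (V : finType) (e : rel V) (W : {set V}) : nat :=
  #|[set X in edges e | X \subset W]|.

Lemma eW_step (V : finType) (e : rel V) (W : {set V}) (v : V) :
  v \in W -> eW e (W :\ v) + #|[set u in W :\ v | e v u]| <= eW e W.
Proof.
move=> vW.
set A := [set X in edges e | X \subset W :\ v].
set N := [set u in W :\ v | e v u].
have injf : {in N &, injective (fun u => [set v; u])}.
  move=> u u' uN u'N /= h.
  have : u \in [set v; u'] by rewrite -h !inE eqxx orbT.
  rewrite !inE => /orP [/eqP uv|/eqP //].
  by move: uN; rewrite !inE uv eqxx.
rewrite /eW -/A -(card_in_imset injf).
have dis : A :&: [set [set v; u] | u in N] = set0.
  apply/setP => X; rewrite in_setI in_set0; apply/negbTE/negP => /andP [].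
  rewrite inE => /andP [_ sub] /imsetP [u _ XE]; subst X.
  by move/subsetP: sub => /(_ v); rewrite !inE eqxx /= => /(_ isT).
rewrite -cardsUI dis cards0 addn0 subset_leq_card //.
  apply/subsetP => X; rewrite !inE => /orP [/andP [-> sub]|/imsetP [u uN ->]].
    by apply: subset_trans sub (subsetDl _ _).
  move: uN; rewrite !inE => /andP [/andP [_ uW] evu].
  apply/andP; split.
    by apply/existsP; exists v; apply/existsP; exists u; rewrite evu eqxx.
  by apply/subsetP => x; rewrite !inE => /orP [/eqP ->|/eqP ->].
Qed.

Lemma main_ind (p : nat) (hp : 2 < p) (V : finType) (e : rel V)
  (esym : symmetric e) (eirr : irreflexive e) :
  forall n (W : {set V}) (D : rel V), #|W| = n -> symmetric D ->
  (forall u w, D u w -> [&& e u w, u \in W & w \in W]) ->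
  exists s : seq {set V},
  [/\ all (fun X : {set V} => (#|X| <= p) && (X \subset W)) s,
      (forall u w, e u w -> odd (cnt s u w) = D u w) &
      (p-1) * size s <= eW e W + (p-2) * (#|W| - 1)].
Proof.
elim=> [|n IH] W D HW Dsym HD.
  have W0 : W = set0 by apply/eqP; rewrite -cards_eq0 HW.
  exists [::]; split => //; last by rewrite muln0.
  move=> u w _; case Duw: (D u w) => //.
  by have := HD _ _ Duw; rewrite W0 inE andbF.
have /card_gt0P [v vW] : 0 < #|W| by rewrite HW.
set W' := W :\ v.
have HW' : #|W'| = n by move: HW; rewrite (cardsD1 v W) vW add1n => [[]].
have vW' : v \notin W' by rewrite !inE eqxx.
set l := enum [set u in W' | D v u].
have vl : v \notin l by rewrite mem_enum inE (negbTE vW').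
have [s1 [A1 S1 P1]] := @star p hp V v l (enum_uniq _) vl.
have A1W : all (fun X : {set V} => X \subset W) s1.
  apply/allP => X /(allP A1) /andP [_ sub]; apply: subset_trans sub _.
  apply/subsetP => x; rewrite !inE => /orP [/eqP -> //|].
  by rewrite mem_enum !inE => /andP [/andP [_ ->]].
set D' := fun u w => [&& e u w, u \in W', w \in W' & D u w (+) odd (cnt s1 u w)].
have D'sym : symmetric D'.
  by move=> u w; rewrite /D' (esym u w) (Dsym u w) (cntC s1 u w); case: (u \in W'); case: (w \in W'); rewrite ?andbF.
have HD' : forall u w, D' u w -> [&& e u w, u \in W' & w \in W'].
  by move=> u w /and4P [-> -> -> _].
have [s2 [A2 P2 S2]] := IH W' D' HW' D'sym HD'.
have A2W : all (fun X : {set V} => X \subset W') s2.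
  by apply/allP => X /(allP A2) /andP [].
exists (s1 ++ s2); split.
- rewrite all_cat; apply/andP; split.
    apply/allP => X Xs; have /andP [-> _] := allP A1 X Xs; exact: (allP A1W X Xs).
  apply/allP => X /(allP A2) /andP [-> sub] /=; apply: subset_trans sub (subsetDl _ _).
- have key : forall w, e v w -> odd (cnt (s1 ++ s2) v w) = D v w.
    move=> w evw; have wv : w != v by apply: contraTneq evw => ->; rewrite eirr.
    rewrite cnt_cat (cnt0 _ A2W vW') addn0 P1 // mem_enum !inE wv /=.
    case Dvw: (D v w); rewrite ?andbF ?andbT //.
    by have /and3P [_ _ ->] := HD _ _ Dvw.
  move=> u w euw.
  case: (eqVneq u v) => [uv|uv]; first by subst u; apply: key.
  case: (eqVneq w v) => [wv|wv].
    by subst w; rewrite cntC Dsym; apply: key; rewrite esym.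
  rewrite cnt_cat oddD P2 // /D' euw /=.
  case uW': (u \in W'); last first.
    have uW : u \notin W by move: uW'; rewrite !inE uv /= => ->.
    rewrite (cnt0 _ A1W uW); case Duw: (D u w) => //.
    by have /and3P [_ uW2 _] := HD _ _ Duw; rewrite uW2 in uW.
  case wW': (w \in W'); last first.
    have wW : w \notin W by move: wW'; rewrite !inE wv /= => ->.
    rewrite cntC (cnt0 _ A1W wW); case Duw: (D u w) => //.
    by have /and3P [_ _ wW2] := HD _ _ Duw; rewrite wW2 in wW.
  by case: (odd _); case: (D u w).
- have hst := eW_step e vW.
  have hl : size l <= #|[set u in W' | e v u]|.
    rewrite /l -cardE; apply: subset_leq_card; apply/subsetP => x.
    by rewrite !inE => /andP [-> /HD /andP [-> _]].
  have hN : #|[set u in W' | e v u]| <= n.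
    rewrite -HW'; apply: subset_leq_card; apply/subsetP => x; rewrite inE => /andP [].
    by [].
  rewrite size_cat mulnDr HW subn1 /=.
  move: S1 S2 hst hl hN; rewrite HW' -/W'.
  case: n IH HW HW' => [|n] _ _ _.
    rewrite muln0 => S1 S2 hst hl hN.
    have a0 : size s1 = 0.
      case: (size s1) S1 => [|k] //; rewrite mulnS => h.
      have : p - 1 <= p - 2 by apply: leq_trans (leq_addr _ _) (leq_trans h _); lia.
      lia.
    rewrite a0 muln0 add0n; lia.
  rewrite subn1 /= mulnS => S1 S2 hst hl hN.
  lia.
Qed.


Import Order.TTheory GRing.Theory Num.Theory.

Lemma final_bound (p : nat) (hp : 2 < p) (k m n : nat) :
  (p - 1) * k <= m + (p - 2) * (n - 1) ->
  (k%:R <= (1 / (p - 1)%:R) * m%:R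
     + ((p - 2)%:R / (p - 1)%:R) * (n - 1)%:R :> rat)%R.
Proof.
move=> h.
have hpos : (0 < (p - 1)%:R :> rat)%R by rewrite ltr0n; lia.
have -> : ((1 / (p - 1)%:R) * m%:R + ((p - 2)%:R / (p - 1)%:R) * (n - 1)%:R
   = (m + (p - 2) * (n - 1))%:R / (p - 1)%:R :> rat)%R.
  by rewrite natrD natrM mul1r mulrDl mulrC [X in (_ + X)%R]mulrAC.
by rewrite ler_pdivlMr // -natrM ler_nat mulnC.
Qed.

Theorem mainTheorem3 (p : nat) (hp : 2 < p) (V : finType) (e : rel V)
  (esym : symmetric e) (eirr : irreflexive e) (hV : 0 < #|V|) :
  inv_diam_le e p
    ((1 / (p - 1)%:R) * #|edges e|%:R
     + ((p - 2)%:R / (p - 1)%:R) * (#|V| - 1)%:R : rat)%R.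
Proof.
move=> o1 o2 [o1e o1s] [o2e o2s].
set D := fun u v => e u v && (o1 u v != o2 u v).
have Dsym : symmetric D.
  move=> u v; rewrite /D (esym u v); case evu: (e v u) => //=.
  by rewrite (o1s _ _ evu) (o2s _ _ evu); case: (o1 u v); case: (o2 u v).
have HD : forall u w, D u w -> [&& e u w, u \in [set: V] & w \in [set: V]].
  by move=> u w /andP [-> _]; rewrite !inE.
have [s [A P S]] := @main_ind p hp V e esym eirr _ [set: V] D erefl Dsym HD.
exists s; split; last first.
  apply: final_bound => //; move: S; rewrite cardsT.
  suff -> : eW e [set: V] = #|edges e| by [].
  rewrite /eW; suff -> : [set X in edges e | X \subset [set: V]] = edges e by [].
  by apply/setP => X; rewrite inE subsetT andbT.
split; first by apply/allP => X /(allP A) /andP [].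
move=> u v; rewrite parity.
case euv: (e u v); last first.
  have evu : e v u = false by rewrite esym.
  have f1 : o1 u v = false by apply/negbTE/negP => /o1e; rewrite euv.
  have f2 : o2 u v = false by apply/negbTE/negP => /o2e; rewrite euv.
  have f3 : o1 v u = false by apply/negbTE/negP => /o1e; rewrite evu.
  by rewrite f1 f2 f3; case: odd.
rewrite P // /D euv /= (o1s _ _ euv) (o2s _ _ euv).
by case: (o1 v u); case: (o2 v u).
Qed.
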